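(* Let $X$ be a finite abelian group. The quotient of $C(S_X^+)$ by the ideal generated by the relations $u_{ij}=u_{kl}$ for all $i,j,k,l\in X$ with $i-j=k-l$ is equal to $C(X)$; more precisely, this quotient is commutative, equal to $C(Y)$ for a subgroup $Y\subset S_X$ with $u_{ij}(\sigma)=\delta_{i\sigma(j)}$, and $Y$ is the group of translations $j\mapsto j+x$, $x\in X$, of $X$.
   Context: $C(S_X^+)$ is the universal $C^*$-algebra generated by the entries of a magic matrix $u=(u_{ij})_{i,j\in X}$ (entries are orthogonal projections, each row and column summing to $1$), with Hopf structure $\Delta(u_{ij})=\sum_ku_{ik}\otimes u_{kj}$, $\varepsilon(u_{ij})=\delta_{ij}$, $S(u_{ij})=u_{ji}$. Its commutative quotients of the form $C(Y)$, $Y\subset S_X$ a subgroup of the permutation group of $X$, correspond to $u_{ij}(\sigma)=\delta_{i\sigma(j)}$. *)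

(* Defs.v *)
From HB Require Import structures.
From mathcomp Require Import all_boot all_order all_algebra all_fingroup.
From mathcomp Require Import complex.
From mathcomp Require Import reals.

Set Implicit Arguments.
Unset Strict Implicit.
Unset Printing Implicit Defensive.

Import Order.TTheory GRing.Theory Num.Theory.
Local Open Scope ring_scope.

Record cstar_alg (R : realType) := CStarAlg {
  cs_car :> algType (complex R);
  cs_star : cs_car -> cs_car;
  cs_norm : cs_car -> R;
  cs_starD : forall a b, cs_star (a + b) = cs_star a + cs_star b;
  cs_starZ : forall (c : complex R) a, cs_star (c *: a) = (conjc c) *: cs_star a;
  cs_starM : forall a b, cs_star (a * b) = cs_star b * cs_star a;
  cs_starK : forall a, cs_star (cs_star a) = a;
  cs_norm_ge0 : forall a, 0 <= cs_norm a;
  cs_norm_eq0 : forall a, cs_norm a = 0 -> a = 0;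
  cs_normD : forall a b, cs_norm (a + b) <= cs_norm a + cs_norm b;
  cs_normZ : forall (c : complex R) a, cs_norm (c *: a) = Normc.normc c * cs_norm a;
  cs_normM : forall a b, cs_norm (a * b) <= cs_norm a * cs_norm b;
  cs_normC : forall a, cs_norm (cs_star a * a) = cs_norm a ^+ 2;
  cs_complete : forall u : nat -> cs_car,
    (forall e : R, 0 < e -> exists N : nat, forall m n : nat,
        (N <= m)%N -> (N <= n)%N -> cs_norm (u m - u n) < e) ->
    exists l : cs_car, forall e : R, 0 < e -> exists N : nat, forall n : nat,
        (N <= n)%N -> cs_norm (u n - l) < e
}.

Definition magic (R : realType) (B : cstar_alg R) (X : finType)
    (u : X -> X -> B) : Prop :=
  (forall i j, cs_star (u i j) = u i j /\ u i j * u i j = u i j) /\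
  (forall i, \sum_(j : X) u i j = 1) /\
  (forall j, \sum_(i : X) u i j = 1).

Definition diff_relations (X : finZmodType) (T : Type) (u : X -> X -> T) : Prop :=
  forall i j k l : X, i - j = k - l -> u i j = u k l.

Definition translations (X : finZmodType) : {set {perm X}} :=
  [set s : {perm X} | [exists x : X, [forall j : X, s j == j + x]]].

(* The points of Y, and C(Y) = functions Y -> C. *)
Definition Ypt (X : finZmodType) := {s : {perm X} | s \in translations X}.

Definition coordC (R : realType) (X : finZmodType) (i j : X)
    : Ypt X -> complex R :=
  fun s => if i == (val s) j then 1 else 0.

Definition magic_CY (R : realType) (X : finZmodType) : Prop :=
  (forall i j (s : Ypt X),
      conjc (coordC R i j s) = coordC R i j s /\
      coordC R i j s * coordC R i j s = coordC R i j s) /\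
  (forall i (s : Ypt X), \sum_(j : X) coordC R i j s = 1) /\
  (forall j (s : Ypt X), \sum_(i : X) coordC R i j s = 1).

Definition star_hom_CY (R : realType) (X : finZmodType) (B : cstar_alg R)
    (phi : (Ypt X -> complex R) -> B) : Prop :=
  [/\ forall f g, phi (fun s => f s + g s) = phi f + phi g,
      forall (c : complex R) f, phi (fun s => c * f s) = c *: phi f,
      forall f g, phi (fun s => f s * g s) = phi f * phi g,
      phi (fun _ => 1) = 1
    & forall f, phi (fun s => conjc (f s)) = cs_star (phi f)].

(* Main.v *)
Require Import Defs.
From HB Require Import structures.
From mathcomp Require Import all_boot all_order all_algebra all_fingroup all_field all_solvable.
From mathcomp Require Import complex.
From mathcomp Require Import reals.
From mathcomp Require Import ring lra.
From Stdlib Require Import FunctionalExtensionality.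
Import Order.TTheory GRing.Theory Num.Theory.
Local Open Scope ring_scope.

Section Basic.
Variable R : realType.
Variable B : cstar_alg R.
Local Notation st := (@cs_star R B).
Local Notation nr := (@cs_norm R B).

Lemma st0 : st 0 = 0.
Proof.
have h : st (0 + 0) = st 0 + st 0 by rewrite cs_starD.
by move: h; rewrite add0r -{1}[st 0]addr0 => /addrI /esym.
Qed.

Lemma stN a : st (- a) = - st a.
Proof. apply/eqP; rewrite -subr_eq0 opprK -cs_starD addNr st0 //. Qed.

Lemma stB a b : st (a - b) = st a - st b.
Proof. by rewrite cs_starD stN. Qed.

Lemma st_sum (I : Type) (r : seq I) (P : pred I) (F : I -> B) :
  st (\sum_(i <- r | P i) F i) = \sum_(i <- r | P i) st (F i).
Proof. exact: (big_morph st (@cs_starD R B) st0). Qed.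

Lemma st1 : st 1 = 1 :> B.
Proof.
have h : st (st 1 * 1) = st 1 * st (st 1) by rewrite cs_starM.
by move: h; rewrite mulr1 !cs_starK mulr1 => /esym.
Qed.

Lemma st_real (t : R) a : st ((t%:C)%C *: a) = (t%:C)%C *: st a.
Proof. by rewrite cs_starZ conjc_real. Qed.

Lemma nr0 : nr 0 = 0.
Proof. by have := cs_normZ 0 (0 : B); rewrite scale0r Normc.normc0 mul0r. Qed.

Lemma nrN a : nr (- a) = nr a.
Proof.
by have := cs_normZ (-1) a; rewrite scaleN1r normcN Normc.normc1 mul1r.
Qed.

Lemma nr_sum (I : Type) (r : seq I) (P : pred I) (F : I -> B) :
  nr (\sum_(i <- r | P i) F i) <= \sum_(i <- r | P i) nr (F i).
Proof.
elim/big_rec2: _ => [|i y1 y2 _ h]; first by rewrite nr0.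
by apply: le_trans (cs_normD _ _) _; rewrite lerD2l.
Qed.

Lemma nr_real (t : R) a : nr ((t%:C)%C *: a) = `|t| * nr a.
Proof. rewrite cs_normZ; congr (_ * _).
rewrite /Normc.normc /= expr0n /= addr0 sqrtr_sqr //.
Qed.

Lemma nr_sqr a : st a = a -> nr (a * a) = nr a ^+ 2.
Proof. by move=> h; rewrite -{1}h cs_normC. Qed.

Lemma nr_le1_of_idem a : st a = a -> a * a = a -> nr a <= 1.
Proof.
move=> h1 h2; have := nr_sqr a h1; rewrite h2 => e.
have [->|nz] := eqVneq (nr a) 0; first by [].
have : nr a * nr a = nr a * 1 by rewrite mulr1 -expr2 -e.
by move/(mulfI nz) => ->.
Qed.

Lemma nr1 : nr 1 <= 1.
Proof. by apply: nr_le1_of_idem; rewrite ?st1 ?mulr1. Qed.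

Lemma nrX a n : nr (a ^+ n) <= nr a ^+ n.
Proof.
elim: n => [|n ih]; first by rewrite !expr0 nr1.
rewrite exprS [X in _ <= X]exprS; apply: le_trans (cs_normM _ _) _.
by apply: ler_wpM2l; [apply: cs_norm_ge0|].
Qed.

Lemma stX a m : st a = a -> st (a ^+ m) = a ^+ m.
Proof.
move=> h; elim: m => [|m ihm]; first by rewrite expr0 st1.
by rewrite exprS cs_starM ihm h -exprSr exprS.
Qed.

Lemma nrX2 a k : st a = a -> nr (a ^+ (2 ^ k)) = nr a ^+ (2 ^ k).
Proof.
move=> h; elim: k => [|k ih]; first by rewrite !expn0 !expr1.
have sa := stX a (2 ^ k)%N h.
by rewrite expnS mulnC !exprM -ih -nr_sqr // expr2.
Qed.

End Basic.

Lemma bern (R : realFieldType) (d : R) n : 0 <= d -> 1 + d *+ n <= (1 + d) ^+ n.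
Proof.
move=> d0; elim: n => [|n ih]; first by rewrite mulr0n addr0 expr0.
rewrite exprSr mulrSr.
have h1 : 0 <= 1 + d by lra.
apply: le_trans (ler_wpM2r h1 ih).
have : 0 <= d *+ n * d by apply: mulr_ge0 => //; apply: mulrn_wge0.
move=> h; rewrite mulrDr mulr1 mulrDl mul1r; lra.
Qed.

Lemma le1_of_pow2 (R : realType) (x : R) :
  0 <= x -> (forall k, x ^+ (2 ^ k) <= 2) -> x <= 1.
Proof.
move=> x0 h; rewrite leNgt; apply/negP => x1.
set d := x - 1.
have d0 : 0 < d by rewrite /d subr_gt0.
have [k hk] : exists k : nat, d^-1 < k%:R.
  by exists (Num.Def.archi_bound d^-1); apply: archi_boundP; rewrite invr_ge0 ltW.
have hk2 : (k <= 2 ^ k)%N by apply: ltnW; apply: ltn_expl.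
have e : 1 + d = x by rewrite /d addrC subrK.
have := @bern _ d (2 ^ k)%N (ltW d0); rewrite e.
have : 1 < d *+ (2 ^ k).
  rewrite -mulr_natr; apply: (@lt_le_trans _ _ (d * k%:R)).
    by move: hk; rewrite -(ltr_pM2l d0) mulfV // gt_eqF.
  by apply: ler_wpM2l; [apply: ltW | rewrite ler_nat].
have := h k; lra.
Qed.

Section Block.
Variable R : realType.
Variable B : cstar_alg R.
Local Notation st := (@cs_star R B).
Local Notation nr := (@cs_norm R B).
Variable e : B.
Hypothesis e_sa : st e = e.
Hypothesis e_id : e * e = e.
Local Notation f := (1 - e).
Let f_sa : st f = f. Proof. by rewrite stB st1 e_sa. Qed.
Let f_id : f * f = f. Proof. by rewrite mulrBl mul1r mulrBr mulr1 e_id subrr subr0. Qed.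
Let fe : f * e = 0. Proof. by rewrite mulrBl mul1r e_id subrr. Qed.
Let ef : e * f = 0. Proof. by rewrite mulrBr mulr1 e_id subrr. Qed.

Definition blk (P Q : B) := f * P * f + e * Q * e.

Lemma blk_mul_gen (g h P Q P' Q' : B) : g * g = g -> h * h = h -> g * h = 0 -> h * g = 0 ->
  (g * P * g + h * Q * h) * (g * P' * g + h * Q' * h) = g * (P * g * P') * g + h * (Q * h * Q') * h.
Proof.
move=> gg hh gh hg; rewrite mulrDl !mulrDr.
have -> : g * P * g * (h * Q' * h) = 0 by rewrite !mulrA -(mulrA _ g h) gh mulr0 !mul0r.
have -> : h * Q * h * (g * P' * g) = 0 by rewrite !mulrA -(mulrA _ h g) hg mulr0 !mul0r.
rewrite addr0 add0r; congr (_ + _).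
  by rewrite !mulrA -(mulrA _ g g) gg.
by rewrite !mulrA -(mulrA _ h h) hh.
Qed.

Lemma blk_mul P Q P' Q' : blk P Q * blk P' Q' = blk (P * f * P') (Q * e * Q').
Proof. exact: blk_mul_gen. Qed.

Lemma blk_st P Q : st (blk P Q) = blk (st P) (st Q).
Proof. by rewrite /blk cs_starD !cs_starM f_sa e_sa !mulrA. Qed.

Lemma blk11 : blk 1 1 = 1.
Proof. by rewrite /blk !mulr1 f_id e_id subrK. Qed.

Lemma nr_f : nr f <= 1. Proof. exact: nr_le1_of_idem. Qed.
Lemma nr_e : nr e <= 1. Proof. exact: nr_le1_of_idem. Qed.

Lemma nr_sand (x P : B) : nr x <= 1 -> nr (x * P * x) <= nr P.
Proof.
move=> hx; apply: le_trans (cs_normM _ _) _.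
have h0 := cs_norm_ge0 P; have h1 := cs_norm_ge0 x.
have : nr (x * P) <= nr P.
  apply: le_trans (cs_normM _ _) _; rewrite -[X in _ <= X]mul1r.
  by apply: ler_wpM2r.
move=> h2; rewrite -[X in _ <= X]mulr1; apply: ler_pM => //.
exact: cs_norm_ge0.
Qed.

Lemma nr_blk P Q : nr (blk P Q) <= nr P + nr Q.
Proof.
apply: le_trans (cs_normD _ _) _; apply: lerD; apply: nr_sand.
  exact: nr_f.
exact: nr_e.
Qed.

Lemma nr_st a : nr (st a) = nr a.
Proof.
have gen : forall b : B, nr b <= nr (st b).
  move=> b; have [z|nz] := eqVneq (nr b) 0; first by rewrite z cs_norm_ge0.
  have h := cs_normC b; have h2 := cs_normM (st b) b; rewrite h expr2 in h2.
  have pos : 0 < nr b by rewrite lt0r nz cs_norm_ge0.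
  by rewrite -(ler_pM2r pos).
apply: le_anti; apply/andP; split; last exact: gen.
by have := gen (st a); rewrite cs_starK.
Qed.

Lemma nr_mul1 a b : nr a <= 1 -> nr b <= 1 -> nr (a * b) <= 1.
Proof.
move=> ha hb; apply: le_trans (cs_normM _ _) _.
rewrite -[X in _ <= X](mulr1 1); apply: ler_pM => //; exact: cs_norm_ge0.
Qed.

Lemma blk_contr P Q : nr P <= 1 -> nr Q <= 1 -> nr (blk P Q) <= 1.
Proof.
move=> hP hQ; set Z := blk P Q.
set S := st Z * Z.
have SE : S = blk (st P * f * P) (st Q * e * Q) by rewrite /S /Z blk_st blk_mul.
have Ssa : st S = S by rewrite /S cs_starM cs_starK.
have hP' : nr (st P * f * P) <= 1 by rewrite !nr_mul1 ?nr_st ?nr_f.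
have hQ' : nr (st Q * e * Q) <= 1 by rewrite !nr_mul1 ?nr_st ?nr_e.
have pw : forall n, exists P1 Q1, [/\ S ^+ n = blk P1 Q1, nr P1 <= 1 & nr Q1 <= 1].
  elim=> [|n [P1 [Q1 [E1 h1 h2]]]].
    by exists 1, 1; rewrite expr0 blk11 nr1.
  exists (P1 * f * (st P * f * P)), (Q1 * e * (st Q * e * Q)).
  split; first by rewrite exprSr E1 SE blk_mul.
    by apply: nr_mul1 => //; apply: nr_mul1 => //; exact: nr_f.
  by apply: nr_mul1 => //; apply: nr_mul1 => //; exact: nr_e.
have hS : nr S <= 1.
  apply: le1_of_pow2; first exact: cs_norm_ge0.
  move=> k; rewrite -nrX2 //; have [P1 [Q1 [E1 h1 h2]]] := pw (2 ^ k)%N.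
  rewrite E1; apply: le_trans (nr_blk _ _) _.
  by have := lerD h1 h2.
have : nr Z ^+ 2 <= 1 by rewrite -cs_normC.
by rewrite expr_le1 // cs_norm_ge0.
Qed.
End Block.
Arguments blk {R B}.

Section Pos.
Variable R : realType.
Variable B : cstar_alg R.
Local Notation st := (@cs_star R B).
Local Notation nr := (@cs_norm R B).

Lemma proj_contr (q : B) (t : R) : st q = q -> q * q = q -> 0 <= t <= 1 ->
  nr (1 - (t%:C)%C *: q) <= 1.
Proof.
move=> qs qq /andP[t0 t1].
have -> : 1 - (t%:C)%C *: q = blk q 1 (((1 - t)%:C)%C *: 1).
  rewrite /blk !mulr1 -scalerAr -scalerAl mulr1 qq.
  have -> : (1 - q) * (1 - q) = 1 - q by rewrite mulrBl mul1r mulrBr mulr1 qq subrr subr0.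
  have -> : ((1 - t)%:C)%C = 1 - (t%:C)%C by rewrite rmorphB rmorph1.
  by rewrite scalerBl scale1r addrA subrK.
apply: blk_contr => //; first exact: nr1.
rewrite nr_real; rewrite -[X in _ <= X]mulr1.
apply: ler_pM; [exact: normr_ge0 | exact: cs_norm_ge0 | | exact: nr1].
by rewrite ger0_norm ?subr_ge0 // lerBlDr lerDl.
Qed.

Lemma cpr_contr (e q : B) (t : R) : st e = e -> e * e = e -> st q = q -> q * q = q ->
  0 <= t <= 1 -> nr (1 - (t%:C)%C *: (e * q * e)) <= 1.
Proof.
move=> es ee qs qq ht.
have -> : 1 - (t%:C)%C *: (e * q * e) = blk e 1 (1 - (t%:C)%C *: q).
  rewrite /blk.
  have -> : (1 - e) * 1 * (1 - e) = 1 - e by rewrite mulr1 mulrBl mul1r mulrBr mulr1 ee subrr subr0.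
  have -> : e * (1 - (t%:C)%C *: q) * e = e - (t%:C)%C *: (e * q * e).
    by rewrite mulrBr mulr1 mulrBl ee -scalerAr -scalerAl.
  by rewrite addrA subrK.
apply: blk_contr => //; first exact: nr1.
exact: proj_contr.
Qed.
End Pos.

Lemma prim_root_ex (R : realType) n : (n > 0)%N -> {z : R[i] | n.-primitive_root z}.
Proof.
pose p : {poly R[i]} := 'X^n - 1; have [r Dp] := closed_field_poly_normal p.
move=> n_gt0; apply/sigW; rewrite (monicP _) ?monicXnsubC // scale1r in Dp.
have rn1: all n.-unity_root r by apply/allP=> z; rewrite -root_prod_XsubC -Dp.
have sz_r: (n < (size r).+1)%N.
  by rewrite -(size_prod_XsubC r id) -Dp size_XnsubC.
have [|z] := hasP (has_prim_root n_gt0 rn1 _ sz_r); last by exists z.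
by rewrite -separable_prod_XsubC -Dp separable_Xn_sub_1 // pnatr_eq0 -lt0n.
Qed.

Lemma geom0 (F : fieldType) (z : F) n : z ^+ n = 1 -> z != 1 -> \sum_(k < n) z ^+ k = 0.
Proof.
move=> zn z1; have := subrX1 z n; rewrite zn subrr => /esym/eqP.
by rewrite mulf_eq0 subr_eq0 (negbTE z1) /= => /eqP.
Qed.

Lemma normcX (R : realType) (z : R[i]) n : Normc.normc (z ^+ n) = Normc.normc z ^+ n.
Proof.
elim: n => [|n ih]; first by rewrite !expr0 Normc.normc1.
by rewrite !exprS Normc.normcM ih.
Qed.

Lemma normc_ge0 (R : realType) (z : R[i]) : 0 <= Normc.normc z.
Proof. by case: z => a b; rewrite /Normc.normc sqrtr_ge0. Qed.

Lemma avg_coef (F : fieldType) (w : F) M : (0 < M)%N -> (M.+1).-primitive_root w ->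
  forall i, (i <= M)%N ->
  \sum_(k < M.+1) (w ^+ k) ^+ M * (w ^+ k) ^+ i = if i == 1%N then (M.+1)%:R else 0.
Proof.
move=> M0 pw i iM.
have E : forall k, (w ^+ k) ^+ M * (w ^+ k) ^+ i = (w ^+ (M + i)) ^+ k.
  by move=> k; rewrite -exprD -!exprM mulnC.
under eq_bigr => k _ do rewrite E.
have wN : (w ^+ (M + i)) ^+ M.+1 = 1.
  by rewrite -exprM mulnC exprM (prim_expr_order pw) expr1n.
case: eqP => [->|i1].
  have -> : w ^+ (M + 1) = 1 by apply/eqP; rewrite -(prim_order_dvd pw) addn1.
  by rewrite (eq_bigr (fun _ => 1)) ?sumr_const ?card_ord // => k _; rewrite expr1n.
apply: geom0 => //; rewrite -(prim_order_dvd pw).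
case: i iM i1 {E wN} => [|[|j]] iM i1 //.
  by rewrite addn0 gtnNdvd.
by rewrite -addSnnS dvdn_addr // gtnNdvd // ltnS ltnW.
Qed.

Section Spec.
Variable R : realType.
Variable B : cstar_alg R.
Local Notation st := (@cs_star R B).
Local Notation nr := (@cs_norm R B).
Local Notation C := (R[i]).
Variable c : B.
Hypothesis c_sa : st c = c.
Local Notation ev := (horner_alg c).

Lemma nr_alg (k : C) (y : B) : nr (k%:A * y) = Normc.normc k * nr y.
Proof. by rewrite mulr_algl cs_normZ. Qed.

Lemma normc_half : Normc.normc (2^-1 : C) = 2^-1.
Proof.
rewrite Normc.normcV; congr (_^-1).
by rewrite -[2 : C]/(1 *+ 2) normcMn Normc.normc1.
Qed.

Lemma ev_lin (k : C) : ev (1 + k%:P * 'X) = 1 + k *: c.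
Proof. by rewrite rmorphD rmorph1 rmorphM /= horner_algC horner_algX mulr_algl. Qed.

Lemma ev_sq (k : C) : ev (1 + k%:P * 'X ^+ 2) = 1 + k *: (c * c).
Proof. by rewrite rmorphD rmorph1 rmorphM rmorphXn /= horner_algC horner_algX mulr_algl expr2. Qed.

Lemma nr_sq_le1 (y : B) : nr y <= 1 -> nr (y ^+ 2) <= 1.
Proof. move=> h; apply: le_trans (@nrX _ _ y 2) _; by rewrite exprn_ile1 // cs_norm_ge0. Qed.

Hypothesis hc : forall t : R, -1 <= t <= 1 -> nr (ev (1 + ((t%:C)%C)%:P * 'X)) <= 1.

Lemma hsq (s : R) : -1 <= s <= 1 -> nr (ev (1 + ((s%:C)%C)%:P * 'X ^+ 2)) <= 1.
Proof.
move=> /andP[s1 s2]; have [s0|s0] := leP 0 s.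
  set t := Num.sqrt s.
  have tt : ((s%:C)%C) = (t%:C)%C * (t%:C)%C by rewrite -rmorphM -expr2 sqr_sqrtr.
  have ht : -1 <= t <= 1.
    have t0 : 0 <= t by apply: sqrtr_ge0.
    have t1 : t <= 1 by rewrite -sqrtr1 ler_sqrt.
    apply/andP; split; lra.
  have htn : -1 <= - t <= 1 by move: ht => /andP[? ?]; apply/andP; split; lra.
  have -> : 1 + ((s%:C)%C)%:P * 'X ^+ 2 = (2^-1 : C)%:P *
     ((1 + ((t%:C)%C)%:P * 'X) ^+ 2 + (1 + (((- t)%:C)%C)%:P * 'X) ^+ 2).
    rewrite tt rmorphN /=.
    have -> : (1 + ((t%:C)%C)%:P * 'X) ^+ 2 + (1 + (- (t%:C)%C)%:P * 'X) ^+ 2 =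
       (2 : C)%:P * (1 + ((t%:C)%C * (t%:C)%C)%:P * 'X ^+ 2).
      rewrite !polyCN !polyCM; ring.
    by rewrite mulrA -polyCM mulVf ?mul1r // pnatr_eq0.
  rewrite rmorphM /= horner_algC nr_alg normc_half.
  rewrite rmorphD !rmorphXn.
  apply: (@le_trans _ _ (2^-1 * (1 + 1))); last by lra.
  apply: ler_wpM2l; first by lra.
  by apply: le_trans (cs_normD _ _) _; apply: lerD; apply: nr_sq_le1; apply: hc.
set t := Num.sqrt (- s).
have tt : ((s%:C)%C) = - ((t%:C)%C * (t%:C)%C).
  by rewrite -rmorphM -expr2 sqr_sqrtr ?oppr_ge0 1?ltW // -rmorphN opprK.
have ht : -1 <= t <= 1.
  have t0 : 0 <= t by apply: sqrtr_ge0.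
  have t1 : t <= 1 by rewrite -sqrtr1 ler_sqrt //; lra.
  apply/andP; split; lra.
have htn : -1 <= - t <= 1 by move: ht => /andP[? ?]; apply/andP; split; lra.
have -> : 1 + ((s%:C)%C)%:P * 'X ^+ 2 =
   (1 + ((t%:C)%C)%:P * 'X) * (1 + (((- t)%:C)%C)%:P * 'X).
  rewrite tt !rmorphN /= ?polyCN !polyCM; ring.
rewrite rmorphM; apply: nr_mul1; exact: hc.
Qed.

Lemma cplx_add (a b : R) : ((a +i* b)%C + conjc (a +i* b)%C) = ((2 * a)%:C)%C.
Proof. apply/eqP; rewrite eq_complex /=; apply/andP; split; apply/eqP; ring. Qed.
Lemma cplx_mul (a b : R) : (conjc (a +i* b)%C * (a +i* b)%C) = ((a^+2 + b^+2)%:C)%C.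
Proof. apply/eqP; rewrite eq_complex /=; apply/andP; split; apply/eqP; ring. Qed.

Lemma hlam (a b : R) : a ^+ 2 + b ^+ 2 = 4^-1 -> nr (1 + (a +i* b)%C *: c) <= 1.
Proof.
move=> hab; set l := (a +i* b)%C; set m := conjc l.
have stx : st (1 + l *: c) = 1 + m *: c by rewrite cs_starD st1 cs_starZ c_sa.
have E : st (1 + l *: c) * (1 + l *: c) = ev ((1 + m%:P * 'X) * (1 + l%:P * 'X)).
  by rewrite stx rmorphM /= !ev_lin.
have P2 : (2 : C)%:P * ((1 + m%:P * 'X) * (1 + l%:P * 'X)) =
   (1 + (l + m)%:P * 'X) ^+ 2 + (1 + (2 * (m * l) - (l + m) ^+ 2)%:P * 'X ^+ 2).
  rewrite ?polyCD ?polyCB ?polyCN ?polyCM ?polyCX; ring.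
have P3 : (1 + m%:P * 'X) * (1 + l%:P * 'X) = (2^-1 : C)%:P *
   ((1 + (l + m)%:P * 'X) ^+ 2 + (1 + (2 * (m * l) - (l + m) ^+ 2)%:P * 'X ^+ 2)).
  by rewrite -P2 mulrA -polyCM mulVf ?mul1r // pnatr_eq0.
have lm : l + m = (((2 * a)%:C)%C) by rewrite /l /m cplx_add.
have ml : m * l = (((a ^+ 2 + b ^+ 2)%:C)%C) by rewrite /l /m cplx_mul.
have sg : 2 * (m * l) - (l + m) ^+ 2 = (((2 * (a ^+ 2 + b ^+ 2) - (2 * a) ^+ 2)%:C)%C).
  by rewrite lm ml !rmorphB !rmorphM ?rmorphXn ?rmorph_nat.
have h1 : nr (st (1 + l *: c) * (1 + l *: c)) <= 1.
  rewrite E P3 rmorphM /= horner_algC nr_alg normc_half rmorphD /= rmorphXn.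
  apply: (@le_trans _ _ (2^-1 * (1 + 1))); last by lra.
  apply: ler_wpM2l; first by lra.
  apply: le_trans (cs_normD _ _) _; apply: lerD.
    by apply: nr_sq_le1; rewrite lm; apply: hc; apply/andP; split; nra.
  by rewrite sg; apply: hsq; apply/andP; split; nra.
have : nr (1 + l *: c) ^+ 2 <= 1 by rewrite -cs_normC.
by rewrite expr_le1 // cs_norm_ge0.
Qed.

Lemma avg_value (w : C) M : (0 < M)%N -> (M.+1).-primitive_root w ->
  \sum_(k < M.+1) ((w ^+ k) ^+ M) *: (1 + (2^-1 * w ^+ k) *: c) ^+ M
  = ((2^-1 * (M.+1)%:R) *+ M) *: c.
Proof.
move=> M0 pw.
have E1 : forall k : 'I_M.+1, ((w ^+ k) ^+ M) *: (1 + (2^-1 * w ^+ k) *: c) ^+ M =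
   \sum_(i < M.+1) ((w ^+ k) ^+ M * (2^-1 * w ^+ k) ^+ i *+ 'C(M, i)) *: c ^+ i.
  move=> k; rewrite addrC exprD1n scaler_sumr; apply: eq_bigr => i _.
  by rewrite exprZn scalerMnl scalerA mulrnAr.
rewrite (eq_bigr _ (fun k _ => E1 k)) exchange_big /=.
have E2 : forall i : 'I_M.+1,
  \sum_(k < M.+1) ((w ^+ k) ^+ M * (2^-1 * w ^+ k) ^+ i *+ 'C(M, i)) *: c ^+ i =
  ((2^-1) ^+ i * (if i == 1%N :> nat then (M.+1)%:R else 0) *+ 'C(M, i)) *: c ^+ i.
  move=> i; rewrite -scaler_suml sumrMnl -(avg_coef _ w M M0 pw i (ltnSE (ltn_ord i))).
  rewrite mulr_sumr; congr (_ *: _); congr (_ *+ _); apply: eq_bigr => k _.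
  by rewrite exprMn mulrCA.
rewrite (eq_bigr _ (fun i _ => E2 i)).
have i1 : (1 < M.+1)%N by rewrite ltnS.
rewrite (bigD1 (Ordinal i1)) //= big1 ?addr0.
  by rewrite expr1 bin1 expr1.
move=> i /negbTE ni; have : (i == 1%N :> nat) = false.
  by apply/negbTE; apply: contraFN ni => /eqP hi; apply/eqP; apply: val_inj.
by move=> ->; rewrite mulr0 mul0rn scale0r.
Qed.

Lemma key_bound M : (0 < M)%N -> M%:R * nr c <= 2.
Proof.
move=> M0.
have [w pw] := prim_root_ex R M.+1 (ltn0Sn M).
have wN := prim_expr_order pw.
have nw : Normc.normc w = 1.
  have : Normc.normc w ^+ M.+1 = 1 by rewrite -normcX wN Normc.normc1.
  by move/eqP; rewrite pexpr_eq1 ?normc_ge0 // => /eqP.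
have hx : forall k : nat, nr (1 + (2^-1 * w ^+ k) *: c) <= 1.
  move=> k.
  have : Normc.normc (2^-1 * w ^+ k) = 2^-1.
    by rewrite Normc.normcM normcX nw expr1n mulr1 normc_half.
  case: (2^-1 * w ^+ k) => a b; rewrite /Normc.normc => hs.
  apply: hlam.
  have h0 : 0 <= a ^+ 2 + b ^+ 2 by rewrite addr_ge0 // sqr_ge0.
  by rewrite -(sqr_sqrtr h0) hs; field.
have bnd : nr (\sum_(k < M.+1) ((w ^+ k) ^+ M) *: (1 + (2^-1 * w ^+ k) *: c) ^+ M)
    <= (M.+1)%:R.
  apply: le_trans (nr_sum _ _ _ _ _ _) _.
  apply: (@le_trans _ _ (\sum_(k < M.+1) (1 : R))); last by rewrite sumr_const card_ord.
  apply: ler_sum => j _; rewrite cs_normZ -exprM normcX nw expr1n mul1r.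
  apply: le_trans (nrX _ _ _ _) _; apply: exprn_ile1; [exact: cs_norm_ge0 | exact: hx].
rewrite avg_value // cs_normZ normcMn Normc.normcM normc_half in bnd.
have nN : Normc.normc ((M.+1)%:R : C) = (M.+1)%:R by rewrite normcMn Normc.normc1.
rewrite nN in bnd.
have x0 := cs_norm_ge0 c.
have N0 : (0 : R) < (M.+1)%:R by rewrite ltr0n.
move: bnd; rewrite -mulr_natr => bnd.
have m0 : (0 : R) <= M%:R by rewrite ler0n.
rewrite -[(M.+1)%:R]/((M.+1)%:R : R) in bnd N0.
nra.
Qed.

Lemma spec0 : c = 0.
Proof.
apply: cs_norm_eq0; apply/eqP; rewrite eq_le cs_norm_ge0 andbT; rewrite leNgt; apply/negP => x0.
set x := nr c.
have [M hM] : exists M : nat, 2 / x < M%:R.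
  exists (Num.Def.archi_bound (2 / x)); apply: archi_boundP.
  by rewrite divr_ge0 // ltW.
have M0 : (0 < M.+1)%N by [].
have := key_bound M.+1 M0.
have : 2 < M%:R * x by rewrite -ltr_pdivrMr.
move=> h1; rewrite -natr1 mulrDl mul1r; move: h1 x0; rewrite /x; lra.
Qed.
End Spec.

Lemma spec0' (R : realType) (B : cstar_alg R) (c : B) : cs_star c = c ->
  (forall t : R, -1 <= t <= 1 -> cs_norm (1 + ((t%:C)%C) *: c) <= 1) -> c = 0.
Proof. move=> sa h; apply: (@spec0 R B c sa) => t ht; rewrite ev_lin; exact: h. Qed.

Section Orth.
Variable R : realType.
Variable B : cstar_alg R.
Local Notation st := (@cs_star R B).
Local Notation nr := (@cs_norm R B).
Variable I : finType.
Variable p : I -> B.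
Hypothesis pp : forall i, st (p i) = p i /\ p i * p i = p i.
Hypothesis psum : \sum_i p i = 1.

Lemma orth x y : x != y -> p x * p y = 0.
Proof.
move=> xy.
have [ex xx] := pp x; have [ey yy] := pp y.
set e := p x.
pose a z := e * p z * e.
have asum : \sum_z a z = e.
  by rewrite /a -mulr_suml -mulr_sumr psum mulr1 xx.
have ax : a x = e by rewrite /a xx xx.
have a0 : \sum_(z | z != x) a z = 0.
  by move: asum; rewrite (bigD1 x) //= ax -{2}[e]addr0 => /addrI.
have ay : a y = - \sum_(z | (z != x) && (z != y)) a z.
  move: a0; rewrite (bigD1 y) /=; last by rewrite eq_sym.
  by move/eqP; rewrite addr_eq0 => /eqP.
have asa : forall z, st (a z) = a z.
  by move=> z; rewrite /a !cs_starM !(proj1 (pp _)) mulrA.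
set K := (#|I|%:R : R).
have K1 : 1 <= K by rewrite ler1n; apply/card_gt0P; exists x.
have K0 : 0 < K by lra.
set c := ((K^-1)%:C)%C *: a y.
have csa : st c = c by rewrite st_real asa.
have hc : forall t : R, -1 <= t <= 1 -> nr (1 + ((t%:C)%C) *: c) <= 1.
  move=> t /andP[t1 t2].
  have tc : ((t%:C)%C) *: c = ((t / K)%:C)%C *: a y by rewrite scalerA -rmorphM.
  rewrite tc; have [tn|tp] := leP t 0.
    have -> : 1 + ((t / K)%:C)%C *: a y = 1 - (((- t / K))%:C)%C *: (e * p y * e).
      by rewrite mulNr rmorphN scaleNr opprK.
    apply: cpr_contr => //; apply/andP; split.
      by apply: divr_ge0; lra.
    by rewrite ler_pdivrMr //; lra.
  pose b z := if (z != x) && (z != y) then a z else 0.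
  have bs : \sum_z b z = \sum_(z | (z != x) && (z != y)) a z by rewrite [RHS]big_mkcond.
  have E : 1 + ((t / K)%:C)%C *: a y = ((K^-1)%:C)%C *: \sum_z (1 - ((t%:C)%C) *: b z).
    have ay' : \sum_(z | (z != x) && (z != y)) a z = - a y by rewrite ay opprK.
    have S1 : \sum_(z : I) (1 : B) = ((K%:C)%C) *: 1.
      by rewrite sumr_const /K rmorph_nat scaler_nat.
    rewrite sumrB S1 -scaler_sumr bs ay' scalerN opprK scalerDr scalerA -rmorphM mulVf ?gt_eqF // rmorph1 scale1r.
    by rewrite scalerA -rmorphM mulrC.
  rewrite E nr_real ger0_norm; last by rewrite invr_ge0 ltW.
  rewrite ler_pdivrMl // mulr1.
  apply: le_trans (nr_sum _ _ _ _ _ _) _.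
  apply: (@le_trans _ _ (\sum_(z : I) (1 : R))); last by rewrite sumr_const.
  apply: ler_sum => z _; rewrite /b; case: ifP => _.
    by apply: cpr_contr; [exact: ex | exact: xx | exact: (proj1 (pp z)) | exact: (proj2 (pp z)) | apply/andP; split; lra].
  by rewrite scaler0 subr0 nr1.
have c0 : c = 0 by apply: spec0'.
have ay0 : a y = 0.
  have : ((K%:C)%C) *: c = a y.
    by rewrite scalerA -rmorphM mulfV ?gt_eqF // scale1r.
  by rewrite c0 scaler0 => <-.
have pye : p y * e = 0.
  apply: cs_norm_eq0; apply/eqP; rewrite -(@sqrf_eq0 _ (nr _)) -cs_normC.
  rewrite cs_starM ey ex mulrA -(mulrA e) yy.
  by rewrite -/(a y) ay0 nr0.
by have := f_equal st pye; rewrite cs_starM ex ey st0.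
Qed.
End Orth.

Section Trans.
Variable X : finZmodType.

Lemma transP {s : {perm X}} : s \in translations X -> exists x, forall j, s j = j + x.
Proof. by rewrite inE => /existsP [x /forallP h]; exists x => j; apply/eqP. Qed.

Lemma ypt_val (s : Ypt X) j : val s j = j + val s 0.
Proof. by have [x hx] := transP (valP s); rewrite !hx add0r. Qed.

Lemma ypt_inj0 (s t : Ypt X) : val s 0 = val t 0 -> s = t.
Proof.
move=> h; apply: val_inj; apply/permP => j; by rewrite ypt_val h -ypt_val.
Qed.

Definition tperm_of (x : X) : {perm X} := perm (addIr x).

Lemma tperm_ofE x j : tperm_of x j = j + x.
Proof. by rewrite permE. Qed.

Lemma tperm_in x : tperm_of x \in translations X.
Proof. by rewrite inE; apply/existsP; exists x; apply/forallP => j; rewrite tperm_ofE. Qed.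

Definition ypt_of (x : X) : Ypt X := exist _ (tperm_of x) (tperm_in x).

Lemma ypt_ofE x j : val (ypt_of x) j = j + x.
Proof. exact: tperm_ofE. Qed.

Lemma group_trans : group_set (translations X).
Proof.
apply/group_setP; split.
  by rewrite inE; apply/existsP; exists 0; apply/forallP => j; rewrite perm1 addr0.
move=> s t /transP [x hx] /transP [y hy].
by rewrite inE; apply/existsP; exists (x + y); apply/forallP => j; rewrite permM hx hy addrA.
Qed.

Variable R : realType.

Lemma sum_delta (I : finType) (a : I) :
  \sum_(i : I) (if i == a then 1 else 0 : R[i]) = 1.
Proof. by rewrite -big_mkcond big_pred1_eq. Qed.

Lemma magicCY : magic_CY R X.
Proof.
split; [|split].
- move=> i j s; rewrite /coordC; case: ifP => _.
    by rewrite rmorph1 mulr1.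
  by rewrite rmorph0 mulr0.
- move=> i s; rewrite /coordC.
  apply: (etrans _ (sum_delta X ((val s)^-1 i)%g)); apply: eq_bigr => j _.
  have -> : (i == val s j) = (j == (val s)^-1 i)%g.
    by apply/eqP/eqP => [->|->]; rewrite ?permK ?permKV.
  by [].
- move=> j s; rewrite /coordC.
  exact: (sum_delta X (val s j)).
Qed.

Lemma coord_rel (i j k l : X) : i - j = k - l -> forall s : Ypt X, coordC R i j s = coordC R k l s.
Proof.
move=> h s; rewrite /coordC (ypt_val s j) (ypt_val s l).
have E : forall a b : X, (a == b + val s 0) = (a - b == val s 0).
  by move=> a b; rewrite subr_eq addrC.
by rewrite !E h.
Qed.
End Trans.
Arguments ypt_of {X}.
Arguments ypt_ofE {X}.
Arguments ypt_val {X}.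
Arguments ypt_inj0 {X}.

Section Univ.
Variable X : finZmodType.
Variable R : realType.
Variable B : cstar_alg R.
Local Notation st := (@cs_star R B).
Local Notation nr := (@cs_norm R B).
Variable u : X -> X -> B.
Hypothesis hm : magic u.
Hypothesis hd : diff_relations u.

Definition Pr (s : Ypt X) : B := u (val s 0) 0.
Definition phi (f : Ypt X -> R[i]) : B := \sum_s f s *: Pr s.

Lemma Pr_proj s : st (Pr s) = Pr s /\ Pr s * Pr s = Pr s.
Proof. by case: hm => h _; apply: h. Qed.

Lemma Pr_orth s t : s != t -> Pr s * Pr t = 0.
Proof.
move=> st_; have [hp [_ hc]] := hm.
apply: (@orth R B X (fun i => u i 0)).
- by move=> i; apply: hp.
- exact: hc.
- by apply: contra st_ => /eqP h; apply/eqP; apply: ypt_inj0.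
Qed.

Lemma phi_coord i j : phi (coordC R i j) = u i j.
Proof.
rewrite /phi (bigD1 (ypt_of (i - j))) //= big1 ?addr0.
  rewrite /coordC ypt_ofE addrC subrK eqxx scale1r /Pr ypt_ofE add0r.
  by apply: hd; rewrite subr0.
move=> s ne; rewrite /coordC; case: eqP => [h|_]; last by rewrite scale0r.
exfalso; move/negP: ne; apply; apply/eqP; apply: ypt_inj0.
by rewrite ypt_ofE add0r; move: h; rewrite ypt_val => ->; rewrite addrC addKr.
Qed.

Lemma Pr_mul s t : Pr s * Pr t = if s == t then Pr s else 0.
Proof.
case: eqP => [->|/eqP ne]; first by case: (Pr_proj t).
exact: Pr_orth.
Qed.

Lemma phi_sum (I : finType) (F : I -> Ypt X -> R[i]) :
  phi (fun s => \sum_i F i s) = \sum_i phi (F i).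
Proof.
rewrite /phi exchange_big /=; apply: eq_bigr => s _; exact: scaler_suml.
Qed.

Lemma coord_sum1 : (fun _ : Ypt X => 1 : R[i]) = (fun s => \sum_i coordC R i 0 s).
Proof.
apply: functional_extensionality => s; have [_ [_ h]] := magicCY X R.
by rewrite h.
Qed.

Lemma phi_hom : star_hom_CY phi.
Proof.
split.
- by move=> f g; rewrite /phi -big_split /=; apply: eq_bigr => s _; rewrite scalerDl.
- by move=> c f; rewrite /phi scaler_sumr; apply: eq_bigr => s _; rewrite scalerA.
- move=> f g; rewrite /phi mulr_suml; apply: eq_bigr => s _.
  rewrite mulr_sumr (bigD1 s) //= big1 ?addr0.
    by rewrite -scalerAl -scalerAr scalerA Pr_mul eqxx.
  move=> t ne; rewrite -scalerAl -scalerAr Pr_mul.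
  by rewrite eq_sym (negbTE ne) !scaler0.
- rewrite coord_sum1 phi_sum; under eq_bigr => i _ do rewrite phi_coord.
  by case: hm => _ [_ h]; apply: h.
- move=> f; rewrite /phi st_sum; apply: eq_bigr => s _.
  by rewrite cs_starZ (proj1 (Pr_proj s)).
Qed.

Lemma psi_unique psi : star_hom_CY psi -> (forall i j, psi (coordC R i j) = u i j) ->
  forall f, psi f = phi f.
Proof.
move=> [hadd hsc hmul h1 hst] hco f.
have h0 : psi (fun _ => 0) = 0.
  have := hsc 0 (fun _ => 0); rewrite scale0r => <-; congr psi.
  by apply: functional_extensionality => s; rewrite mul0r.
have hs : forall (r : seq (Ypt X)) (g : Ypt X -> Ypt X -> R[i]),
    psi (fun t => \sum_(s <- r) g s t) = \sum_(s <- r) psi (g s).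
  elim => [|a r ih] g.
    rewrite big_nil -h0; congr psi.
    by apply: functional_extensionality => t; rewrite big_nil.
  have -> : (fun t => \sum_(s <- a :: r) g s t) = (fun t => g a t + (fun t => \sum_(s <- r) g s t) t).
    by apply: functional_extensionality => t; rewrite big_cons.
  by rewrite hadd ih big_cons.
have ef : f = fun t => \sum_s f s * coordC R (val s 0) 0 t.
  apply: functional_extensionality => t.
  rewrite (bigD1 t) //= /coordC eqxx mulr1 big1 ?addr0 // => s ne.
  case: eqP => h; last by rewrite mulr0.
  by exfalso; move/negP: ne; apply; apply/eqP; apply: ypt_inj0.
rewrite {1}ef hs /phi; apply: eq_bigr => s _.
by rewrite hsc hco.
Qed.
End Univ.

Theorem lemma3p5 (X : finZmodType) (R : realType) :
  group_set (translations X) /\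
  magic_CY R X /\
  (forall i j k l : X, i - j = k - l ->
     forall s : Ypt X, coordC R i j s = coordC R k l s) /\
  (forall (B : cstar_alg R) (u : X -> X -> B),
     magic u -> diff_relations u ->
     exists phi : (Ypt X -> complex R) -> B,
       [/\ star_hom_CY phi,
           forall i j, phi (coordC R i j) = u i j
         & forall psi : (Ypt X -> complex R) -> B,
             star_hom_CY psi -> (forall i j, psi (coordC R i j) = u i j) ->
             forall f, psi f = phi f]).
Proof.
split; first exact: group_trans.
split; first exact: magicCY.
split; first exact: coord_rel.
move=> B u hm hd; exists (@phi X R B u); split.
- exact: phi_hom.
- exact: phi_coord.
- exact: psi_unique.
Qed.
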